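(* Let $\mathcal{F}$ be a semi-metric space with semi-metric $d$, $x\in\mathcal{F}$, and $X_1,X_2,\ldots$ i.i.d. $\mathcal{F}$-valued random elements. Let $\varphi(h)=P(X_1\in B(x,h))$ where $B(x,h)=\{x':d(x',x)\le h\}$, and $\varphi^{-1}(t)=\inf\{h:\varphi(h)\ge t\}$. Let $k=k_n$ satisfy $k/n\to0$ and $k/\log n\to\infty$, and let $H=\inf\{h\in\mathbb{R}:\sum_{i=1}^nI\{X_i\in B(x,h)\}\ge k\}$. Then $P\big(H>\varphi^{-1}(2k/n)\ \text{infinitely often}\big)=0$, i.e. almost surely $H\le\varphi^{-1}(2k/n)$ for all $n$ large enough. *)

(* Defs.v *)
From HB Require Import structures.
From mathcomp Require Import all_boot all_order all_algebra.
From mathcomp Require Import all_classical all_reals all_analysis.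
Set Implicit Arguments. Unset Strict Implicit. Unset Printing Implicit Defensive.
Import Order.TTheory GRing.Theory Num.Theory.
Import numFieldNormedType.Exports.
Local Open Scope classical_set_scope.
Local Open Scope ring_scope.

Section Defs.
Context {R : realType} {dF : measure_display} {F : measurableType dF}.

(* Semi-metric in the sense of Ferraty--Vieu: a pseudometric
   (d x' x = 0 does not force x' = x). *)
Definition semi_metric (d : F -> F -> R) : Prop :=
  [/\ forall a b, 0 <= d a b,
      forall a, d a a = 0,
      forall a b, d a b = d b a &
      forall a b c, d a c <= d a b + d b c].

Definition cball (d : F -> F -> R) (x : F) (h : R) : set F :=
  [set x' | d x' x <= h].

Context {dO : measure_display} {Om : measurableType dO}.

Definition mutually_independent (P : probability Om R) (X : nat -> Om -> F) :=
  forall (s : seq nat) (A : nat -> set F), uniq s ->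
    (forall i, measurable (A i)) ->
    P (\bigcap_(i in [set i | i \in s]) (X i @^-1` A i)) =
    (\prod_(i <- s) P (X i @^-1` A i))%E.

Definition identically_distributed (P : probability Om R) (X : nat -> Om -> F) :=
  forall i (A : set F), measurable A -> P (X i @^-1` A) = P (X 0%N @^-1` A).

Definition small_ball_prob (P : probability Om R) (X : nat -> Om -> F)
  (d : F -> F -> R) (x : F) (h : R) : \bar R := P (X 0%N @^-1` cball d x h).

(* phi^{-1}(t) = inf {h : phi(h) >= t}  (in \bar R; inf of empty set = +oo) *)
Definition small_ball_inv (P : probability Om R) (X : nat -> Om -> F)
  (d : F -> F -> R) (x : F) (t : R) : \bar R :=
  ereal_inf [set h%:E | h in [set h : R | (t%:E <= small_ball_prob P X d x h)%E]].

(* H_n = inf {h in R : sum_{i=1}^n 1{X_i in B(x,h)} >= k}  (X_i is X (i-1)) *)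
Definition knn_radius (X : nat -> Om -> F) (d : F -> F -> R) (x : F)
  (k n : nat) (w : Om) : \bar R :=
  ereal_inf [set h%:E | h in
    [set h : R | (k <= \sum_(i < n) nat_of_bool (d (X i w) x <= h)%R)%N]].

End Defs.

(* Main.v *)
Require Import Defs.
From HB Require Import structures.
From mathcomp Require Import all_boot all_order all_algebra.
From mathcomp Require Import all_classical all_reals all_analysis.
From mathcomp Require Import ring lra zify.
Import Order.TTheory GRing.Theory Num.Theory.
Import numFieldNormedType.Exports.
Local Open Scope classical_set_scope.
Local Open Scope ring_scope.


Section Key.
Context (R : realType) (dF : measure_display) (F : measurableType dF)
  (d : F -> F -> R) (x : F) (dO : measure_display) (Om : measurableType dO)
  (P : probability Om R) (X : nat -> Om -> F).
Hypotheses (mB : forall h, measurable (cball d x h))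
  (mX : forall i, measurable_fun setT (X i))
  (indep : mutually_independent P X) (idd : identically_distributed P X).

Definition prP (A : set Om) : R := fine (P A).

Lemma PE A : measurable A -> P A = (prP A)%:E.
Proof. by move=> mA; rewrite /prP fineK // fin_num_measure. Qed.

Lemma prP_ge0 A : 0 <= prP A.
Proof. by rewrite /prP fine_ge0. Qed.

Lemma prP_le A B : measurable A -> measurable B -> A `<=` B -> prP A <= prP B.
Proof.
move=> mA mBB AB; rewrite -lee_fin -!PE //.
by apply: le_measure => //; rewrite inE.
Qed.

Lemma prP_U A B : measurable A -> measurable B -> prP (A `|` B) <= prP A + prP B.
Proof.
move=> mA mBB; rewrite -lee_fin EFinD -!PE //; last exact: measurableU.
exact: measureU2.
Qed.

Lemma prP_le1 A : measurable A -> prP A <= 1.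
Proof. by move=> mA; rewrite -lee_fin -PE // probability_le1. Qed.

Lemma prP_setT : prP setT = 1.
Proof. by rewrite /prP probability_setT. Qed.

Lemma mpre i {B : set F} : measurable B -> measurable (X i @^-1` B).
Proof. by move=> mB'; rewrite -[X i @^-1` B]setTI; apply: mX. Qed.

Definition Gs (s : seq nat) (A : nat -> set F) :=
  \bigcap_(i in [set i | i \in s]) (X i @^-1` A i).

Lemma mGs s A : (forall i, measurable (A i)) -> measurable (Gs s A).
Proof. by move=> mA; apply: bigcap_measurableType => i _; apply: mpre. Qed.

Lemma Gs_cons n s A : Gs (n :: s) A = X n @^-1` A n `&` Gs s A.
Proof.
apply/seteqP; split=> w /=.
  move=> H; split; first by apply: (H n); rewrite /= inE eqxx.
  by move=> i /= si; apply: H; rewrite /= inE si orbT.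
by move=> [H1 H2] i /=; rewrite inE => /orP[/eqP->//|si]; apply: H2.
Qed.

Lemma Gs_eq s A A' : (forall i, i \in s -> A i = A' i) -> Gs s A = Gs s A'.
Proof.
move=> AA; apply/seteqP; split=> w H i /= si; have := H i si; by rewrite /= AA.
Qed.

Lemma Gs_nil A : Gs [::] A = setT.
Proof. by apply/seteqP; split=> w //= _ i. Qed.

Lemma prP_indep n s A (B : set F) : n \notin s -> uniq s ->
  (forall i, measurable (A i)) -> measurable B ->
  prP (X n @^-1` B `&` Gs s A) = prP (X n @^-1` B) * prP (Gs s A).
Proof.
move=> ns us mA mB'.
pose A' i := if i == n then B else A i.
have mA' i : measurable (A' i) by rewrite /A'; case: ifP.
have E1 : Gs (n :: s) A' = X n @^-1` B `&` Gs s A.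
  rewrite Gs_cons /A' eqxx; congr (_ `&` _); apply: Gs_eq => i si.
  by case: eqP => // en; move: ns; rewrite -en si.
have := indep (n :: s) A'; rewrite /= ns us => /(_ isT mA').
rewrite -/(Gs (n :: s) A') E1 big_cons /A' eqxx.
have -> : \big[*%E/1%E]_(j <- s) P (X j @^-1` (if j == n then B else A j)) =
    \big[*%E/1%E]_(j <- s) P (X j @^-1` A j).
  apply: eq_big_seq => i si; case: eqP => // en; by move: ns; rewrite -en si.
rewrite -(indep s A us mA) -/(Gs s A).
rewrite !PE //; last 3 first.
- exact: mGs.
- exact: mpre.
- by apply: measurableI; [exact: mpre| exact: mGs].
by rewrite -EFinM => -[].
Qed.

Variable h : R.
Definition Ev i := X i @^-1` cball d x h.
Definition Snt n w := (\sum_(i < n) nat_of_bool (d (X i w) x <= h)%R)%N.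
Definition pp := prP (Ev 0).

Lemma pp_ge0 : 0 <= pp. Proof. exact: prP_ge0. Qed.
Lemma pp_le1 : pp <= 1. Proof. exact/prP_le1/mpre. Qed.

Lemma prEv n : prP (X n @^-1` cball d x h) = pp.
Proof. by rewrite /pp /Ev /prP idd. Qed.

Lemma prEvC n : prP (X n @^-1` ~` cball d x h) = 1 - pp.
Proof.
rewrite -preimage_setC /prP probability_setC; last exact: mpre.
rewrite idd // -/(prP _) -/(Ev 0) /prP.
have := fin_num_measure P _ (mpre 0 (mB h)).
by move/fineK => <-.
Qed.

Lemma Sdec n j : [set w | (Snt n.+1 w < j.+1)%N] =
  ([set w | (Snt n w < j.+1)%N] `&` ~` Ev n) `|` ([set w | (Snt n w < j)%N] `&` Ev n).
Proof.
apply/seteqP; split=> w /=; rewrite /Snt big_ord_recr /= /Ev /cball /preimage /=;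
  case: (d (X n w) x <= h) => /=; rewrite ?addn1 ?addn0 ?ltnS.
- by move=> H; right.
- by move=> H; left; split.
- by case=> -[].
- by case=> -[].
Qed.

Lemma mS n j : measurable [set w | (Snt n w < j)%N].
Proof.
elim: n j => [|n IH] j.
  rewrite /Snt; case: j => [|j].
    by rewrite (_ : [set w | _] = set0) //; apply/seteqP; split=> w //=; rewrite big_ord0.
  by rewrite (_ : [set w | _] = setT) //; apply/seteqP; split=> w //=; rewrite big_ord0.
case: j => [|j].
  by rewrite (_ : [set w | _] = set0) //; apply/seteqP; split=> w //=.
rewrite Sdec; apply: measurableU; apply: measurableI => //.
  by apply: measurableC; apply: mpre.
exact: mpre.
Qed.

Lemma key n : forall j s A, uniq s -> (forall i, i \in s -> (n <= i)%N) ->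
  (forall i, measurable (A i)) ->
  prP ([set w | (Snt n w < j)%N] `&` Gs s A) <=
    2 ^+ j * (1 - pp / 2) ^+ n * prP (Gs s A).
Proof.
have c0 : 0 <= 1 - pp / 2 by have := pp_le1; have := pp_ge0; lra.
elim: n => [|n IH] j s A us sn mA.
  rewrite expr0 mulr1; apply: (@le_trans _ _ (prP (Gs s A))).
    apply: prP_le; [apply: measurableI; [exact: mS|exact: mGs]|exact: mGs|exact: subIsetr].
  rewrite -[X in X <= _]mul1r; apply: ler_wpM2r; first exact: prP_ge0.
  by apply: exprn_ege1; rewrite ler1n.
case: j => [|j].
  rewrite (_ : [set w | _] = set0); last by apply/seteqP; split=> w.
  by rewrite set0I /prP measure0 /= mulr_ge0 ?prP_ge0 // mulr_ge0 // exprn_ge0.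
have nns : n \notin s by apply/negP => /sn; rewrite ltnn.
have us' : uniq (n :: s) by rewrite /= nns us.
have sn' : forall i, i \in n :: s -> (n <= i)%N.
  by move=> i; rewrite inE => /orP[/eqP->//|/sn/ltnW].
pose A1 i := if i == n then ~` cball d x h else A i.
pose A2 i := if i == n then cball d x h else A i.
have mA1 i : measurable (A1 i) by rewrite /A1; case: ifP => // _; exact: measurableC.
have mA2 i : measurable (A2 i) by rewrite /A2; case: ifP.
have GA1 : Gs s A1 = Gs s A.
  by apply: Gs_eq => i si; rewrite /A1; case: eqP => // en; move: nns; rewrite -en si.
have GA2 : Gs s A2 = Gs s A.
  by apply: Gs_eq => i si; rewrite /A2; case: eqP => // en; move: nns; rewrite -en si.
have E1 : ~` Ev n `&` Gs s A = Gs (n :: s) A1.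
  by rewrite Gs_cons /A1 eqxx GA1 /Ev preimage_setC.
have E2 : Ev n `&` Gs s A = Gs (n :: s) A2.
  by rewrite Gs_cons /A2 eqxx GA2 /Ev.
have pr1 : prP (Gs (n :: s) A1) = (1 - pp) * prP (Gs s A).
  by rewrite -E1 preimage_setC prP_indep // ?prEvC //; exact: measurableC.
have pr2 : prP (Gs (n :: s) A2) = pp * prP (Gs s A).
  by rewrite -E2 /Ev prP_indep // prEv.
rewrite Sdec setIUl -!setIA E1 E2.
apply: le_trans; first apply: prP_U.
- by apply: measurableI; [exact: mS|exact: mGs].
- by apply: measurableI; [exact: mS|exact: mGs].
apply: le_trans; first apply: lerD; [exact: IH|exact: IH|].
rewrite pr1 pr2 !exprS.
set a := 2 ^+ j; set b := (1 - pp / 2) ^+ n; set g := prP (Gs s A).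
have -> : 2 * a * b * ((1 - pp) * g) + a * b * (pp * g) =
  2 * a * ((1 - pp / 2) * b) * g by field.
done.
Qed.

Lemma key0 n j : prP [set w | (Snt n w < j)%N] <= 2 ^+ j * (1 - pp / 2) ^+ n.
Proof.
have := @key n j [::] (fun _ => setT) isT (fun i => fun H => ltac:(by [])) (fun _ => measurableT).
by rewrite Gs_nil setIT prP_setT mulr1.
Qed.
End Key.


Lemma ln2_lt1 (R : realType) : ln (2 : R) < 1.
Proof.
have h2 : (2 : R) < expR 1.
  by have := @expR_gt1Dx R 1 (oner_neq0 _); rewrite (_ : 1 + 1 = 2 :> R).
by rewrite -ltr_expR lnK // posrE.
Qed.

Lemma exp_bound (R : realType) (k n : nat) (p : R) :
  0 <= p <= 1 -> 2 * k%:R / n%:R <= p -> (3 <= n)%N ->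
  3 * ln (n%:R : R) <= (1 - ln (2 : R)) * k%:R ->
  2 ^+ k * (1 - p / 2) ^+ n <= (n.+1%:R)^-1 - (n.+2%:R)^-1.
Proof.
move=> /andP[p0 p1] kp n3 kn.
have n0 : (0 : R) < n%:R by rewrite ltr0n; lia.
have h1 : (1 - p / 2) ^+ n <= expR (- k%:R).
  apply: (@le_trans _ _ (expR (- (p / 2)) ^+ n)).
    by apply: lerXn2r; rewrite ?nnegrE ?expR_ge0 //; [lra | apply: le_trans (expR_ge1Dx _); lra].
  rewrite -expRM_natl ler_expR.
  move: kp; rewrite ler_pdivrMr // => kp; lra.
have h2 : (2 : R) ^+ k = expR (k%:R * ln 2).
  by rewrite expRM_natl lnK // posrE.
apply: (@le_trans _ _ (expR (- (3 * ln n%:R)))).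
  apply: (@le_trans _ _ (2 ^+ k * expR (- k%:R))).
    by apply: ler_wpM2l; [exact: exprn_ge0|].
  rewrite h2 -expRD ler_expR; lra.
rewrite expRN expRM_natl lnK ?posrE //.
have -> : (n.+1%:R)^-1 - (n.+2%:R)^-1 = ((n.+1 * n.+2)%:R : R)^-1.
  rewrite natrM -[n.+2]addn1 -[n.+1]addn1 natrD -addnA natrD; field.
  by apply/andP; split; apply: lt0r_neq0; lra.
rewrite lef_pV2 ?posrE ?exprn_gt0 ?ltr0n //; last by lia.
rewrite -natrX ler_nat.
have : (n.+1 * n.+2 <= n * n * n)%N by nia.
by rewrite expnS expnS expn1 mulnA.
Qed.


Lemma inf_attained (R : realType) (dF : measure_display) (F : measurableType dF)
  (d : F -> F -> R) (x : F)
  (dO : measure_display) (Om : measurableType dO) (P : probability Om R)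
  (X : nat -> Om -> F) :
  semi_metric d ->
  (forall h : R, measurable (cball d x h)) ->
  (forall i, measurable_fun setT (X i)) ->
  forall t : R, 0 < t -> (exists h, (t%:E <= small_ball_prob P X d x h)%E) ->
  exists hs : R, small_ball_inv P X d x t = hs%:E /\
     (t%:E <= small_ball_prob P X d x hs)%E.
Proof.
move=> [d0 _ _ _] mB mX t t0 [h0 Hh0].
have mpre (B : set F) : measurable B -> measurable (X 0%N @^-1` B).
  by move=> mB'; rewrite -[X 0%N @^-1` B]setTI; apply: mX.
have mono a b : a <= b -> (small_ball_prob P X d x a <= small_ball_prob P X d x b)%E.
  move=> ab; apply: le_measure; rewrite ?inE; try exact/mpre/mB.
  by move=> w /=; rewrite /cball /= => /le_trans; apply.
have S0 : forall h, (t%:E <= small_ball_prob P X d x h)%E -> 0 <= h.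
  move=> h Hh; rewrite leNgt; apply/negP => hneg.
  move: Hh; rewrite /small_ball_prob.
  have -> : cball d x h = set0.
    by apply/seteqP; split=> w //=; rewrite /cball /= => H; move: (le_lt_trans (d0 w x) (le_lt_trans H hneg)); rewrite ltxx.
  by rewrite preimage_set0 measure0 lee_fin leNgt t0.
have i0 : (0 <= small_ball_inv P X d x t)%E by apply/ereal_infP => _ [h Hh <-]; rewrite lee_fin; exact: S0.
have iS : (small_ball_inv P X d x t <= h0%:E)%E by apply: ereal_inf_lbound; exists h0.
have fin : small_ball_inv P X d x t \is a fin_num.
  by rewrite ge0_fin_numE // (le_lt_trans iS) // ltry.
set hs := fine (small_ball_inv P X d x t).
have hsE : small_ball_inv P X d x t = hs%:E by rewrite /hs fineK.
exists hs; split => //.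
pose Fn m := X 0%N @^-1` cball d x (hs + m.+1%:R^-1).
have tF m : (t%:E <= P (Fn m))%E.
  have e0 : (0 : R) < m.+1%:R^-1 by rewrite invr_gt0 ltr0n.
  have [_ [s Hs <-]] := lb_ereal_inf_adherent e0 fin.
  rewrite -/(small_ball_inv _ _ _ _ _) hsE -EFinD lte_fin => shs.
  by apply: (le_trans Hs); apply: mono; apply: ltW.
have capE : \bigcap_m Fn m = X 0%N @^-1` cball d x hs.
  apply/seteqP; split=> w /=.
    move=> H; rewrite /cball /=; rewrite leNgt; apply/negP => /ltr_add_invr [m Hm].
    by have := H m I; rewrite /Fn /cball /= leNgt Hm.
  move=> H m _; rewrite /Fn /cball /=; apply: (le_trans H).
  by rewrite lerDl invr_ge0.
have cv := @nonincreasing_cvg_mu _ _ _ P Fn _ _ _ _.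
have := cv (le_lt_trans (probability_le1 P (mpre _ (mB _))) (ltry _)) (fun m => mpre _ (mB _)).
rewrite capE => /(_ (mpre _ (mB _))).
have ni : nonincreasing_seq Fn.
  move=> a b ab; apply/subsetPset; rewrite /Fn => w /=; rewrite /cball /= => H.
  apply: (le_trans H); rewrite lerD2l lef_pV2 ?posrE ?ltr0n // ler_nat; lia.
move=> /(_ ni) cvP.
rewrite /small_ball_prob -(cvg_lim _ cvP) //.
apply: lime_ge; first by apply/cvg_ex; eexists; exact: cvP.
by apply: nearW => m /=; exact: tF.
Qed.


Lemma tele_bound (R : realType) (N0 : nat) m :
  \sum_(0 <= n < m) (if (N0 <= n)%N then (n.+1%:R : R)^-1 - (n.+2%:R)^-1 else 0)
  <= 1 - (m.+1%:R)^-1.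
Proof.
elim: m => [|m IH]; first by rewrite big_geq // invr1 subrr.
rewrite big_nat_recr //=; case: ifP => _.
  apply: le_trans (lerD IH (lexx _)) _.
  by rewrite addrA subrK.
rewrite addr0; apply: (le_trans IH); rewrite lerD2l lerN2 lef_pV2 ?posrE ?ltr0n //.
by rewrite ler_nat.
Qed.

Theorem proposition1 (R : realType) (dF : measure_display) (F : measurableType dF)
  (d : F -> F -> R) (x : F)
  (dO : measure_display) (Om : measurableType dO) (P : probability Om R)
  (X : nat -> Om -> F) (k : nat -> nat) :
  semi_metric d ->
  (forall h : R, measurable (cball d x h)) ->
  (forall i, measurable_fun setT (X i)) ->
  mutually_independent P X ->
  identically_distributed P X ->
  (fun n => (k n)%:R / n%:R : R) @ \oo --> 0 ->
  (fun n => (k n)%:R / ln (n%:R) : R) @ \oo --> +oo ->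
  {ae P, forall w, \forall n \near \oo,
      (knn_radius X d x (k n) n w
       <= small_ball_inv P X d x (2 * (k n)%:R / n%:R))%E}.
Proof.
move=> sm mB mX ind idd _ Hk.
pose a : R := 1 - ln (2 : R).
have a0 : 0 < a by rewrite /a subr_gt0 ln2_lt1.
have [N1 _ HN1] := cvgry_ge Hk (3 / a).
pose N0 := maxn N1 3.
have goodn n : (N0 <= n)%N ->
  [/\ (3 <= n)%N, 3 * ln (n%:R : R) <= a * (k n)%:R & 0 < 2 * (k n)%:R / (n%:R : R)].
  move=> Hn; have n3 : (3 <= n)%N by move: Hn; rewrite /N0 geq_max => /andP[].
  have n1 : (N1 <= n)%N by move: Hn; rewrite /N0 geq_max => /andP[].
  have ln0 : 0 < ln (n%:R : R) by rewrite ln_gt0 // ltr1n; lia.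
  have := HN1 n n1; rewrite /= ler_pdivrMr // => H.
  have kl : 3 * ln (n%:R : R) <= a * (k n)%:R.
    by move: H; rewrite mulrAC ler_pdivlMr // [_ * a]mulrC.
  split => //; apply: divr_gt0; last by rewrite ltr0n; lia.
  rewrite mulr_gt0 // ltr0n lt0n; apply/negP => /eqP k0; move: kl.
  by rewrite k0 mulr0 leNgt mulr_gt0.
pose t n : R := 2 * (k n)%:R / n%:R.
pose cond n := (N0 <= n)%N /\ exists h, ((t n)%:E <= small_ball_prob P X d x h)%E.
pose hs n := fine (small_ball_inv P X d x (t n)).
pose A n := if `[< cond n >] then [set w | (Snt _ _ _ d x _ _ X (hs n) n w < k n)%N] else set0.
have mA n : measurable (A n).
  rewrite /A; case: asboolP => _ //; exact: mS.
pose b n : R := if (N0 <= n)%N then (n.+1%:R : R)^-1 - (n.+2%:R)^-1 else 0.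
have b0 n : 0 <= b n.
  rewrite /b; case: ifP => // _; rewrite subr_ge0 lef_pV2 ?posrE ?ltr0n //.
  by rewrite ler_nat.
have bound n : (P (A n) <= (b n)%:E)%E.
  rewrite /A; case: asboolP => [[Hn Hex]|_]; last by rewrite measure0 lee_fin.
  have [n3 kl t0] := goodn n Hn.
  have [h' [hE hP]] := @inf_attained _ _ _ _ _ _ _ _ _ sm mB mX _ t0 Hex.
  have hsE : hs n = h' by rewrite /hs hE.
  rewrite /b Hn PE; last exact: mS.
  rewrite lee_fin; apply: le_trans; first exact: key0.
  apply: exp_bound => //.
    by rewrite pp_ge0 pp_le1.
  rewrite -lee_fin /pp -PE; last exact: mpre.
  by rewrite hsE.
have sumb : (\sum_(0 <= n <oo) P (A n) < +oo)%E.
  apply: (@le_lt_trans _ _ 1%E); last exact: ltry.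
  apply: le_trans; first apply: (lee_nneseries (fun n _ _ => measure_ge0 _ _) (fun n _ => bound n)).
  apply: lime_le; first by apply: is_cvg_nneseries => n _ _; rewrite lee_fin.
  apply: nearW => m /=; rewrite sumEFin lee_fin; apply: le_trans; first exact: tele_bound.
  by rewrite gerBl invr_ge0.
pose N := \bigcap_m \bigcup_(n in ~` `I_m) A n.
have mN : measurable N.
  by apply: bigcap_measurableType => m _; apply: bigcup_measurable => n _; exact: mA.
have PN0 : P N = 0%E.
  apply/eqP; rewrite -measure_le0.
  have tl := nneseries_tail_cvg sumb (fun n _ => measure_ge0 P (A n)).
  rewrite -(cvg_lim _ tl) //; apply: lime_ge; first by apply/cvg_ex; eexists; exact: tl.
  apply: nearW => m; apply: measure_sigma_subadditive_tail => //.
  by move=> w Nw; exact: Nw m I.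
exists N; split => // w /= nQ m _.
apply: contrapT => H; apply: nQ.
exists (maxn m N0) => // n /=; rewrite geq_max => /andP[mn N0n].
have nA : ~ A n w.
  move=> An; apply: H; exists n => //.
  by move=> /= nm; move: (leq_trans nm mn); rewrite ltnn.
case: (pselect (exists h, ((t n)%:E <= small_ball_prob P X d x h)%E)) => [Hex|Hnex].
  have [n3 kl t0] := goodn n N0n.
  have [h' [hE hP]] := @inf_attained _ _ _ _ _ _ _ _ _ sm mB mX _ t0 Hex.
  rewrite -/(t n) hE.
  have hsE : hs n = h' by rewrite /hs hE.
  have cn : `[< cond n >] by apply/asboolP; split.
  move: nA; rewrite /A cn /= hsE => /negP; rewrite -leqNgt => kS.
  by apply: ereal_inf_lbound; exists h'.
rewrite -/(t n) /small_ball_inv.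
rewrite (_ : [set _ | _ in _] = set0) ?ereal_inf0 ?leey //.
apply/seteqP; split => [y [h Hh hy]|y //]; by case: Hnex; exists h.
Qed.
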